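(* Let $d_1,d_2$ be positive integers. The set $U=\{F\in\Omega_2(d_1,d_2):\ J(F)\text{ is reduced and }\deg J(F)=d_1+d_2-2\}$ is an open subset of $\Omega_2(d_1,d_2)$.
   Context: $\Omega_2(d_1,d_2)$ is the set of polynomial mappings $F=(f,g):\mathbb{C}^2\to\mathbb{C}^2$ with $\deg f\le d_1$, $\deg g\le d_2$, identified with $\mathbb{C}^N$ via coefficients. $J(F)=f_xg_y-f_yg_x$; reduced means square-free as a polynomial. *)

(* Defs.v *)
From HB Require Import structures.
From mathcomp Require Import all_boot all_order all_algebra.
From mathcomp Require Import reals.
From mathcomp Require Import complex.
From mathcomp Require Import mpoly.

Set Implicit Arguments.
Unset Strict Implicit.
Unset Printing Implicit Defensive.

Import Order.TTheory GRing.Theory Num.Theory.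
Local Open Scope ring_scope.

Section Defs.
Variable C : fieldType.

Definition poly2 := {mpoly C[2]}.

Definition var_x : 'I_2 := ord0.
Definition var_y : 'I_2 := ord_max.

(* total degree bound: deg p <= d  (msize p = 1 + total degree, msize 0 = 0) *)
Definition deg_le (d : nat) (p : poly2) : Prop := (msize p <= d.+1)%N.

(* total degree equal to d (the zero polynomial has no degree) *)
Definition deg_eq (d : nat) (p : poly2) : Prop := msize p = d.+1.

Definition Omega2 (d1 d2 : nat) (F : poly2 * poly2) : Prop :=
  deg_le d1 F.1 /\ deg_le d2 F.2.

Definition jac (F : poly2 * poly2) : poly2 :=
  mderiv var_x F.1 * mderiv var_y F.2 - mderiv var_y F.1 * mderiv var_x F.2.

(* reduced = square-free: no nonconstant polynomial h with h^2 | p *)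
Definition reduced (p : poly2) : Prop :=
  forall h q : poly2, p = h * h * q -> (msize h <= 1)%N.
End Defs.

(* Openness in Omega_2(d1,d2) identified with C^N via coefficients
   (Euclidean topology; equivalently the sup-norm on coefficients). *)
Definition open_in_Omega2 (R : realType) (d1 d2 : nat)
    (U : poly2 R[i] * poly2 R[i] -> Prop) : Prop :=
  forall F, Omega2 d1 d2 F -> U F ->
    exists eps : R, 0 < eps /\
      forall G, Omega2 d1 d2 G ->
        (forall m : 'X_{1..2},
            `|G.1@_m - F.1@_m| < eps%:C /\ `|G.2@_m - F.2@_m| < eps%:C)%C ->
        U G.

(* Main.v *)
Require Import Defs.
From HB Require Import structures.
From mathcomp Require Import all_boot all_order all_algebra.
From mathcomp Require Import reals complex mpoly.
From mathcomp Require Import boolp classical_sets topology normedtype derive.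
From mathcomp Require Import ring lra.
Import Order.TTheory GRing.Theory Num.Theory.
Import numFieldNormedType.Exports.
Set Implicit Arguments.
Unset Strict Implicit.
Unset Printing Implicit Defensive.
Local Open Scope ring_scope.

Section Cont.
Variable R : realType.
Local Notation C := (R[i]).
Local Notation P := ({mpoly C[2]}).
Local Notation re := (@complex.Re R).
Local Notation im := (@complex.Im R).

Lemma ReD (x y : C) : re (x + y) = re x + re y. Proof. by case: x; case: y. Qed.
Lemma ImD (x y : C) : im (x + y) = im x + im y. Proof. by case: x; case: y. Qed.
Lemma ReN (x : C) : re (- x) = - re x. Proof. by case: x. Qed.
Lemma ImN (x : C) : im (- x) = - im x. Proof. by case: x. Qed.
Lemma ReM (x y : C) : re (x * y) = re x * re y - im x * im y. Proof. by case: x => a b; case: y => c d; simpc. Qed.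
Lemma ImM (x y : C) : im (x * y) = re x * im y + im x * re y. Proof. by case: x => a b; case: y => c d; simpc. Qed.
Lemma Re0 : re (0 : C) = 0. Proof. by []. Qed.
Lemma Im0 : im (0 : C) = 0. Proof. by []. Qed.

Variable T : topologicalType.

Definition ccont (g : T -> C) :=
  continuous (fun t => re (g t)) /\ continuous (fun t => im (g t)).

Lemma rcontD (f g : T -> R) : continuous f -> continuous g ->
  continuous (fun t => f t + g t).
Proof. by move=> cf cg x; exact: (continuousD (cf x) (cg x)). Qed.
Lemma rcontN (f : T -> R) : continuous f -> continuous (fun t => - f t).
Proof. by move=> cf x; exact: (continuousN (cf x)). Qed.
Lemma rcontM (f g : T -> R) : continuous f -> continuous g ->
  continuous (fun t => f t * g t).
Proof. by move=> cf cg x; exact: (continuousM (cf x) (cg x)). Qed.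
Lemma rcontB (f g : T -> R) : continuous f -> continuous g ->
  continuous (fun t => f t - g t).
Proof. by move=> cf cg; apply: rcontD => //; apply: rcontN. Qed.
Lemma rcont_cst (c : R) : continuous (fun _ : T => c).
Proof. exact: cst_continuous. Qed.

Lemma rcont_sum (I : Type) (r : seq I) (Q : pred I) (F : I -> T -> R) :
  (forall i, continuous (F i)) ->
  continuous (fun t => \sum_(i <- r | Q i) F i t).
Proof.
move=> cF; elim: r => [|a r IH].
  by under eq_fun do rewrite big_nil; apply: rcont_cst.
under eq_fun do rewrite big_cons.
case: (Q a) => //; exact: rcontD.
Qed.

Lemma ccont_cst (c : C) : ccont (fun _ => c).
Proof. by split; apply: rcont_cst. Qed.
Lemma ccontD f g : ccont f -> ccont g -> ccont (fun t => f t + g t).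
Proof.
move=> [f1 f2] [g1 g2]; split.
  by under eq_fun do rewrite ReD; apply: rcontD.
by under eq_fun do rewrite ImD; apply: rcontD.
Qed.
Lemma ccontN f : ccont f -> ccont (fun t => - f t).
Proof.
move=> [f1 f2]; split.
  by under eq_fun do rewrite ReN; apply: rcontN.
by under eq_fun do rewrite ImN; apply: rcontN.
Qed.
Lemma ccontB f g : ccont f -> ccont g -> ccont (fun t => f t - g t).
Proof. by move=> cf cg; apply: ccontD => //; apply: ccontN. Qed.
Lemma ccontM f g : ccont f -> ccont g -> ccont (fun t => f t * g t).
Proof.
move=> [f1 f2] [g1 g2]; split.
  by under eq_fun do rewrite ReM; apply: rcontB; apply: rcontM.
by under eq_fun do rewrite ImM; apply: rcontD; apply: rcontM.
Qed.
Lemma ccont_sum (I : Type) (r : seq I) (Q : pred I) (F : I -> T -> C) :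
  (forall i, ccont (F i)) ->
  ccont (fun t => \sum_(i <- r | Q i) F i t).
Proof.
move=> cF; elim: r => [|a r IH].
  by under eq_fun do rewrite big_nil; apply: ccont_cst.
under eq_fun do rewrite big_cons.
case: (Q a) => //; exact: ccontD.
Qed.
Lemma ccontMn f k : ccont f -> ccont (fun t => f t *+ k).
Proof.
move=> cf; elim: k => [|k IH].
  by under eq_fun do rewrite mulr0n; apply: ccont_cst.
by under eq_fun do rewrite mulrS; apply: ccontD.
Qed.
Lemma ccont_mk (f g : T -> R) : continuous f -> continuous g ->
  ccont (fun t => (f t +i* g t)%C).
Proof. by move=> cf cg; split. Qed.

Definition sq (z : C) : R := re z ^+ 2 + im z ^+ 2.
Lemma sq_cont f : ccont f -> continuous (fun t => sq (f t)).
Proof.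
by move=> [f1 f2]; rewrite /sq; apply: rcontD; under eq_fun do rewrite expr2;
  apply: rcontM.
Qed.

Definition pcont (Phi : T -> P) := forall m, ccont (fun t => (Phi t)@_m).

Lemma pcont_cst p : pcont (fun _ => p).
Proof. by move=> m; apply: ccont_cst. Qed.
Lemma pcontD F G : pcont F -> pcont G -> pcont (fun t => F t + G t).
Proof. by move=> cF cG m; under eq_fun do rewrite mcoeffD; apply: ccontD. Qed.
Lemma pcontB F G : pcont F -> pcont G -> pcont (fun t => F t - G t).
Proof. by move=> cF cG m; under eq_fun do rewrite mcoeffB; apply: ccontB. Qed.
Lemma pcontM F G : pcont F -> pcont G -> pcont (fun t => F t * G t).
Proof.
move=> cF cG m; under eq_fun do rewrite mcoeffM.
by apply: ccont_sum => i; apply: ccontM.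
Qed.
Lemma pcont_deriv i F : pcont F -> pcont (fun t => mderiv i (F t)).
Proof.
by move=> cF m; under eq_fun do rewrite mcoeff_mderiv; apply: ccontMn.
Qed.
End Cont.

Section Poly.
Variable R : realType.
Local Notation C := (R[i]).
Local Notation P := ({mpoly C[2]}).
Local Notation re := (@complex.Re R).
Local Notation im := (@complex.Im R).
Local Notation MB b := ('X_{1..2 < b}).

Lemma msize_leP (p : P) k :
  (msize p <= k)%N <-> (forall m, (k <= mdeg m)%N -> p@_m = 0).
Proof.
split.
  move=> le m km; apply/eqP; rewrite mcoeff_eq0; apply: msize_mdeg_ge.
  exact: leq_trans le km.
move=> H; rewrite msizeE; apply/bigmax_leqP_seq => m ms _.
rewrite ltnNge; apply/negP => km.
by have /eqP := H m km; rewrite mcoeff_eq0 ms.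
Qed.

Definition cpl b (f : MB b * bool -> R) (m : MB b) : C :=
  (f (m, false) +i* f (m, true))%C.
Definition polf b (f : MB b * bool -> R) : P :=
  \sum_(m : MB b) cpl f m *: 'X_[m].
Arguments polf b f : clear implicits.

Lemma polf_coef b f m' :
  (polf b f)@_m' = \sum_(m : MB b) cpl f m * (val m == m')%:R.
Proof.
rewrite /polf raddf_sum; apply: eq_bigr => m _.
by rewrite /= mcoeffZ mcoeffX.
Qed.

Lemma polf_coefE b f m' :
  (polf b f)@_m' = if (insub m' : option (MB b)) is Some m then cpl f m else 0.
Proof.
rewrite polf_coef; case: insubP => [m _ <-|Hn].
  rewrite (bigD1 m) //= eqxx mulr1 big1 ?addr0 // => m0 ne.
  by rewrite val_eqE (negbTE ne) mulr0.
rewrite big1 // => m _; case: eqP => [e|]; last by rewrite mulr0.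
by move: Hn; rewrite -e bmdeg.
Qed.

Definition coord b (p : P) (mb : MB b * bool) : R :=
  if mb.2 then im p@_(mb.1) else re p@_(mb.1).
Arguments coord b p mb : clear implicits.

Lemma cpl_coord b p (m : MB b) : cpl (coord b p) m = p@_m.
Proof. by rewrite /cpl /coord /=; case: (p@_m). Qed.

Lemma polf_coord b p : (msize p <= b)%N -> polf b (coord b p) = p.
Proof.
move=> le; apply/mpolyP => m'; rewrite polf_coefE.
case: insubP => [m _ <-|Hn]; first by rewrite cpl_coord.
by symmetry; move/msize_leP: le; apply; rewrite leqNgt.
Qed.

Lemma msize_polf b f k :
  (forall m : MB b, (k <= mdeg m)%N -> f (m, false) = 0 /\ f (m, true) = 0) ->
  (k <= b)%N -> (msize (polf b f) <= k)%N.
Proof.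
move=> H kb; apply/msize_leP => m km; rewrite polf_coefE.
case: insubP => [m0 _ e|//]; rewrite /cpl.
have [-> ->] : f (m0, false) = 0 /\ f (m0, true) = 0 by apply: H; rewrite e.
by [].
Qed.

Lemma polf_coef_at b f (m : MB b) : (polf b f)@_m = cpl f m.
Proof. by rewrite polf_coefE valK. Qed.

Lemma sq_ge0 (z : C) : 0 <= sq z.
Proof. by rewrite /sq addr_ge0 // sqr_ge0. Qed.

Lemma sq_eq0 (z : C) : sq z = 0 -> z = 0.
Proof.
case: z => a b; rewrite /sq /= => /eqP; rewrite paddr_eq0 ?sqr_ge0 //.
by rewrite !sqrf_eq0 => /andP[/eqP -> /eqP ->].
Qed.

Lemma sq_gt0 (z : C) : z != 0 -> 0 < sq z.
Proof.
move=> nz; rewrite lt0r sq_ge0 andbT; apply/eqP => /sq_eq0 e.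
by rewrite e eqxx in nz.
Qed.

Lemma sqM (x y : C) : sq (x * y) = sq x * sq y.
Proof. case: x => a b; case: y => c d; rewrite /sq; simpc; rewrite /=. ring. Qed.

Lemma sqN (x : C) : sq (- x) = sq x.
Proof. by case: x => a b; rewrite /sq /= !sqrrN. Qed.

Lemma sq1 : sq (1 : C) = 1.
Proof. by rewrite /sq /= expr1n expr0n addr0. Qed.

Lemma sq_sub_le (x y : C) : sq x <= 2 * sq (x - y) + 2 * sq y.
Proof.
case: x => a b; case: y => c d; rewrite /sq /=.
have := sqr_ge0 (a - 2 * c); have := sqr_ge0 (b - 2 * d).
rewrite !expr2 => h1 h2; nra.
Qed.

Lemma sq_re_le (z : C) : re z ^+ 2 <= sq z.
Proof. by rewrite /sq lerDl sqr_ge0. Qed.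
Lemma sq_im_le (z : C) : im z ^+ 2 <= sq z.
Proof. by rewrite /sq lerDr sqr_ge0. Qed.

Lemma sq_bound (a X : R) : 0 <= X -> a ^+ 2 <= X -> - (1 + X) <= a <= 1 + X.
Proof. move=> X0 h; apply/andP; split; nra. Qed.

Lemma sq_bound1 (a : R) : a ^+ 2 <= 1 -> -1 <= a <= 1.
Proof. move=> h; apply/andP; split; nra. Qed.

Definition ns b (p : P) : R := \sum_(m : MB b) sq (p@_m).
Arguments ns b p : clear implicits.

Lemma ns_ge0 b p : 0 <= ns b p.
Proof. by rewrite /ns sumr_ge0 // => m _; apply: sq_ge0. Qed.

Lemma ns_ge_term b p (m : MB b) : sq (p@_m) <= ns b p.
Proof.
rewrite /ns (bigD1 m) //= lerDl sumr_ge0 // => ? _; exact: sq_ge0.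
Qed.

Lemma ns_ge_term' b p m : (mdeg m < b)%N -> sq (p@_m) <= ns b p.
Proof.
move=> mb; have := ns_ge_term p (BMultinom mb); by [].
Qed.

Lemma ns_gt0 b p : p != 0 -> (msize p <= b)%N -> 0 < ns b p.
Proof.
move=> nz le; have : p@_(mlead p) != 0 by rewrite mleadc_eq0.
move=> nzc; have h : (mdeg (mlead p) < b)%N by rewrite -ltnS mlead_deg.
by apply: lt_le_trans (ns_ge_term' p h); exact: sq_gt0.
Qed.

Lemma ns_eq0 b p : (msize p <= b)%N -> ns b p <= 0 -> p = 0.
Proof.
move=> le h; apply/eqP; apply/negPn/negP => nz.
by have := ns_gt0 nz le; rewrite ltNge h.
Qed.

Lemma nsZ b c p : ns b (c *: p) = sq c * ns b p.
Proof.
by rewrite /ns mulr_sumr; apply: eq_bigr => m _; rewrite mcoeffZ sqM.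
Qed.

Lemma ns_sub_le b x y : ns b x <= 2 * ns b (x - y) + 2 * ns b y.
Proof.
rewrite /ns !mulr_sumr -big_split /=; apply: ler_sum => m _.
by rewrite mcoeffB; apply: sq_sub_le.
Qed.

Variable T : topologicalType.

Lemma pcont_polf b (F : T -> MB b * bool -> R) :
  (forall mb, continuous (fun t => F t mb)) -> pcont (fun t => polf b (F t)).
Proof.
move=> cF m; under eq_fun do rewrite polf_coef.
apply: ccont_sum => m0; apply: ccontM; last exact: ccont_cst.
by apply: ccont_mk; apply: cF.
Qed.

Lemma ns_cont b (Phi : T -> P) : pcont Phi -> continuous (fun t => ns b (Phi t)).
Proof. by move=> cP; apply: rcont_sum => m; apply: sq_cont. Qed.

End Poly.
Arguments polf {R} b f.
Arguments coord {R} b p mb.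
Arguments ns {R} b p.

Section Compact.
Variable R : realType.

Lemma box_lb (K : nat) (lo hi : 'I_K -> R) (f : 'rV[R]_K -> R) :
  continuous f ->
  (forall v : 'rV[R]_K, (forall j, lo j <= v ord0 j <= hi j) -> 0 < f v) ->
  exists2 c, 0 < c & forall v : 'rV[R]_K,
    (forall j, lo j <= v ord0 j <= hi j) -> c <= f v.
Proof.
move=> cf pos.
pose A := [set v : 'rV[R]_K | forall i, `[lo i, hi i]%classic (v ord0 i)]%classic.
have AE v : A v <-> (forall j, lo j <= v ord0 j <= hi j).
  by split => H j; have := H j; rewrite /= in_itv.
have [A0|A0] := pselect (A !=set0)%classic; last first.
  by exists 1 => // v /AE Av; exfalso; apply: A0; exists v.
have cA : compact A.
  by apply: (@rV_compact _ K (fun i => `[lo i, hi i]%classic)) => i; apply: segment_compact.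
have [c cA' minc] := compact_EVT_min A0 cA (continuous_subspaceT cf).
move/set_mem: cA' => cA'.
exists (f c); first by apply: pos; apply/AE.
by move=> v /AE Av; apply: minc; apply/mem_set.
Qed.

Lemma fin_lb (I : finType) (Q : I -> R -> Prop) :
  (forall i, exists2 c, 0 < c & Q i c) ->
  (forall i c c', 0 < c' -> c' <= c -> Q i c -> Q i c') ->
  exists2 c, 0 < c & forall i, Q i c.
Proof.
move=> ex mono.
suff [c c0 Hc] : exists2 c, 0 < c & forall i, i \in enum I -> Q i c.
  by exists c => // i; apply: Hc; rewrite mem_enum.
elim: (enum I) => [|a s [c c0 Hc]]; first by exists 1.
have [c' c'0 Hc'] := ex a.
exists (Num.min c c'); first by rewrite lt_min c0 c'0.
move=> i; rewrite in_cons => /orP[/eqP ->|iS].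
  by apply: mono Hc'; rewrite ?lt_min ?c0 ?c'0 // ge_min lexx orbT.
by apply: mono (Hc i iS); rewrite ?lt_min ?c0 ?c'0 // ge_min lexx.
Qed.

Lemma exists_max (I : finType) (i0 : I) (F : I -> R) :
  exists i, forall j, F j <= F i.
Proof.
suff [i Hi] : exists i, forall j, j \in enum I -> F j <= F i.
  by exists i => j; apply: Hi; rewrite mem_enum.
elim: (enum I) => [|a s [i Hi]]; first by exists i0.
case: (leP (F a) (F i)) => h.
  by exists i => j; rewrite in_cons => /orP[/eqP ->//|]; apply: Hi.
exists a => j; rewrite in_cons => /orP[/eqP ->//|js].
by apply: le_trans (Hi j js) (ltW h).
Qed.

End Compact.

From mathcomp Require Import zify.
Section Deg.
Variable R : realType.
Local Notation C := (R[i]).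
Local Notation P := ({mpoly C[2]}).

Lemma msize_mul_le (p q : P) a b :
  (msize p <= a.+1)%N -> (msize q <= b.+1)%N -> (msize (p * q) <= (a + b).+1)%N.
Proof.
have [->|pn] := eqVneq p 0; first by rewrite mul0r msize0.
have [->|qn] := eqVneq q 0; first by rewrite mulr0 msize0.
rewrite msizeM //.
have key x y : (0 < x)%N -> (0 < y)%N -> (x <= a.+1)%N -> (y <= b.+1)%N ->
  ((x + y).-1 <= (a + b).+1)%N by move=> *; lia.
by apply: key; rewrite // lt0n msize_poly_eq0.
Qed.

Lemma msize_deriv_le i (p : P) a :
  (msize p <= a.+1)%N -> (msize (mderiv i p) <= a)%N.
Proof.
move/msize_leP => H; apply/msize_leP => m am.
rewrite mcoeff_mderiv H ?mul0rn // mdegD mdeg1; lia.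
Qed.

Lemma msize_sub_le (p q : P) k :
  (msize p <= k)%N -> (msize q <= k)%N -> (msize (p - q) <= k)%N.
Proof.
move/msize_leP => Hp /msize_leP Hq; apply/msize_leP => m km.
by rewrite mcoeffB Hp // Hq // subr0.
Qed.
End Deg.

Section Coords.
Variable R : realType.
Local Notation C := (R[i]).
Local Notation P := ({mpoly C[2]}).
Local Notation MB b := ('X_{1..2 < b}).

Definition KK b := #|{: MB b * bool}|.
Definition fL b (v : 'rV[R]_(KK b + KK b)) (mb : MB b * bool) : R :=
  v ord0 (lshift (KK b) (enum_rank mb)).
Definition fR b (v : 'rV[R]_(KK b + KK b)) (mb : MB b * bool) : R :=
  v ord0 (rshift (KK b) (enum_rank mb)).
Definition mkv b (a c : MB b * bool -> R) : 'rV[R]_(KK b + KK b) :=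
  \row_j match split j with inl x => a (enum_val x) | inr y => c (enum_val y) end.
Arguments mkv b a c : clear implicits.

Lemma fL_mkv b a c : fL (mkv b a c) = a.
Proof.
by apply/funext => mb; rewrite /fL /mkv mxE (unsplitK (inl _ _)) enum_rankK.
Qed.
Lemma fR_mkv b a c : fR (mkv b a c) = c.
Proof.
by apply/funext => mb; rewrite /fR /mkv mxE (unsplitK (inr _ _)) enum_rankK.
Qed.

Definition sbox b (sL sR : MB b * bool -> R * R) (v : 'rV[R]_(KK b + KK b)) :=
  forall j, (match split j with inl x => sL (enum_val x) | inr y => sR (enum_val y) end).1
   <= v ord0 j <=
  (match split j with inl x => sL (enum_val x) | inr y => sR (enum_val y) end).2.

Lemma sboxP b (sL sR : MB b * bool -> R * R) (v : 'rV[R]_(KK b + KK b)) :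
  sbox sL sR v <->
  (forall mb, (sL mb).1 <= fL v mb <= (sL mb).2) /\
  (forall mb, (sR mb).1 <= fR v mb <= (sR mb).2).
Proof.
split.
  move=> H; split => mb.
    by have := H (lshift (KK b) (enum_rank mb)); rewrite (unsplitK (inl _ _)) enum_rankK.
  by have := H (rshift (KK b) (enum_rank mb)); rewrite (unsplitK (inr _ _)) enum_rankK.
move=> [HL HR] j; rewrite -(splitK j); case: (split j) => x /=.
  by rewrite (unsplitK (inl _ _)); have := HL (enum_val x); rewrite /fL enum_valK.
by rewrite (unsplitK (inr _ _)); have := HR (enum_val x); rewrite /fR enum_valK.
Qed.

Lemma fL_cont b mb : continuous (fun v : 'rV[R]_(KK b + KK b) => fL v mb).
Proof. exact: coord_continuous. Qed.
Lemma fR_cont b mb : continuous (fun v : 'rV[R]_(KK b + KK b) => fR v mb).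
Proof. exact: coord_continuous. Qed.

End Coords.
Arguments mkv {R} b a c.

Section Main.
Variable R : realType.
Local Notation C := (R[i]).
Local Notation P := ({mpoly C[2]}).
Local Notation MB b := ('X_{1..2 < b}).
Variables (n : nat) (p : P).
Hypotheses (hsz : msize p = n.+1) (hred : reduced p).
Local Notation N := n.+1.

Definition hspec k (ms : MB N) (mb : MB N * bool) : R * R :=
  if mb.1 == ms then (if mb.2 then (0, 0) else (1, 1))
  else if (mdeg mb.1 <= k)%N then (-1, 1) else (0, 0).
Definition qspec kq (qn : option (MB N)) (B : R) (mb : MB N * bool) : R * R :=
  if (kq < mdeg mb.1)%N then (0, 0)
  else if qn == Some mb.1 then (if mb.2 then (0, 0) else (1, 1))
  else (- B, B).

Lemma one_C : ((1 : R) +i* 0)%C = 1 :> C.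
Proof. by []. Qed.

Lemma hpol_facts k (ms : MB N) (f : MB N * bool -> R) :
  (mdeg ms <= k)%N -> (k < N)%N ->
  (forall mb, (hspec k ms mb).1 <= f mb <= (hspec k ms mb).2) ->
  (polf N f)@_ms = 1 /\ (msize (polf N f) <= k.+1)%N.
Proof.
move=> msk kN hb; split.
  rewrite polf_coef_at /cpl.
  have := hb (ms, false); have := hb (ms, true).
  rewrite /hspec /= eqxx /= => /le_anti <- /le_anti <-; exact: one_C.
apply: msize_polf => // m km.
have nm : (m == ms) = false.
  by apply/negbTE; apply/eqP => e; move: km; rewrite e; lia.
have nk : (mdeg m <= k)%N = false by lia.
have := hb (m, false); have := hb (m, true).
by rewrite /hspec /= nm nk /= => /le_anti <- /le_anti <-.
Qed.

Lemma qpol_facts kq qn B (f : MB N * bool -> R) :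
  (kq < N)%N ->
  (forall mb, (qspec kq qn B mb).1 <= f mb <= (qspec kq qn B mb).2) ->
  (msize (polf N f) <= kq.+1)%N /\
  (forall mq, qn = Some mq -> (mdeg mq <= kq)%N -> (polf N f)@_mq = 1).
Proof.
move=> kN hb; split.
  apply: msize_polf => // m km.
  have := hb (m, false); have := hb (m, true).
  by rewrite /qspec /= km /= => /le_anti <- /le_anti <-.
move=> mq eqn mqk; subst qn; rewrite polf_coef_at /cpl.
have ee : (kq < mdeg mq)%N = false by lia.
have := hb (mq, false); have := hb (mq, true).
by rewrite /qspec /= ee eqxx /= => /le_anti <- /le_anti <-; exact: one_C.
Qed.

Lemma phi1_pos k (ms mq : MB N) (v : 'rV[R]_(KK N + KK N)) :
  (1 <= k)%N -> (2 * k <= n)%N -> (mdeg ms <= k)%N -> (mdeg mq <= n - 2 * k)%N ->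
  sbox (hspec k ms) (qspec (n - 2 * k) (Some mq) 1) v ->
  0 < ns N (polf N (fL v) * polf N (fL v) * polf N (fR v)).
Proof.
move=> k1 k2 msk mqk /sboxP [hL hR].
have kN : (k < N)%N by lia.
have kqN : (n - 2 * k < N)%N by lia.
have [h1 hs] := hpol_facts msk kN hL.
have [qs q1] := qpol_facts kqN hR.
have q1' := q1 mq erefl mqk.
apply: ns_gt0.
  rewrite !mulf_neq0 //; apply/eqP => e.
  - by move: h1; rewrite e mcoeff0 => /eqP; rewrite eq_sym oner_eq0.
  - by move: h1; rewrite e mcoeff0 => /eqP; rewrite eq_sym oner_eq0.
  - by move: q1'; rewrite e mcoeff0 => /eqP; rewrite eq_sym oner_eq0.
have := msize_mul_le (msize_mul_le hs hs) qs.
have -> : (k + k + (n - 2 * k)).+1 = N by lia.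
by [].
Qed.

Lemma phi2_pos k (ms : MB N) (B : R) (v : 'rV[R]_(KK N + KK N)) :
  (1 <= k)%N -> (2 * k <= n)%N -> (mdeg ms <= k)%N ->
  sbox (hspec k ms) (qspec (n - 2 * k) None B) v ->
  0 < ns N (polf N (fL v) * polf N (fL v) * polf N (fR v) - p).
Proof.
move=> k1 k2 msk /sboxP [hL hR].
have kN : (k < N)%N by lia.
have kqN : (n - 2 * k < N)%N by lia.
have [h1 hs] := hpol_facts msk kN hL.
have [qs _] := qpol_facts kqN hR.
set h := polf N (fL v); set q := polf N (fR v).
rewrite ltNge; apply/negP => le0.
have hhq : (msize (h * h * q) <= N)%N.
  have := msize_mul_le (msize_mul_le hs hs) qs.
  by have -> : (k + k + (n - 2 * k)).+1 = N by lia.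
have e : h * h * q - p = 0.
  by apply: (ns_eq0 (b := N)) => //; apply: msize_sub_le => //; rewrite hsz.
have {}e : p = h * h * q by apply/eqP; rewrite eq_sym -subr_eq0 e.
have hle := hred e.
have hn : h != 0 by apply/eqP => e'; move: h1; rewrite -/h e' mcoeff0 => /eqP; rewrite eq_sym oner_eq0.
have qn : q != 0.
  apply/eqP => e'; move: hsz; rewrite e e' mulr0 msize0 //.
have hhn : h * h != 0 by rewrite mulf_neq0.
move: hsz; rewrite e msizeM // msizeM //.
have : (0 < msize q)%N by rewrite lt0n msize_poly_eq0.
have key x y : (x <= 1)%N -> (0 < y)%N -> (y <= (n - 2 * k).+1)%N ->
  ((x + x).-1 + y).-1 = n.+1 -> False by move=> *; lia.
move=> q0 ee; exact: (key _ _ hle q0 qs ee).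
Qed.

End Main.
Arguments hspec {R n} k ms mb.
Arguments qspec {R n} kq qn B mb.

Section Boxes.
Variable R : realType.
Local Notation C := (R[i]).
Local Notation P := ({mpoly C[2]}).
Local Notation MB b := ('X_{1..2 < b}).
Local Notation re := (@complex.Re R).
Local Notation im := (@complex.Im R).

Lemma coord_b1 b (q : P) (mb : MB b * bool) :
  sq (q@_(mb.1)) <= 1 -> -1 <= coord b q mb <= 1.
Proof.
move=> h; rewrite /coord; case: (mb.2); apply: sq_bound1.
  exact: le_trans (sq_im_le _) h.
exact: le_trans (sq_re_le _) h.
Qed.

Lemma coord_bX b (q : P) (mb : MB b * bool) X :
  0 <= X -> sq (q@_(mb.1)) <= X -> - (1 + X) <= coord b q mb <= 1 + X.
Proof.
move=> X0 h; rewrite /coord; case: (mb.2); apply: sq_bound => //.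
  exact: le_trans (sq_im_le _) h.
exact: le_trans (sq_re_le _) h.
Qed.

Lemma coord_0 b (q : P) (mb : MB b * bool) : q@_(mb.1) = 0 -> coord b q mb = 0.
Proof. by rewrite /coord => ->; case: (mb.2). Qed.

Lemma coord_1 b (q : P) (m : MB b) :
  q@_m = 1 -> coord b q (m, false) = 1 /\ coord b q (m, true) = 0.
Proof. by rewrite /coord /= => ->. Qed.

Lemma sqV_le (a z : C) : a != 0 -> sq z <= sq a -> sq (a^-1 * z) <= 1.
Proof.
move=> an h; rewrite sqM.
have sa : 0 < sq a by apply: sq_gt0.
have e : sq a^-1 * sq a = 1 by rewrite -sqM mulVf // sq1.
have sai : 0 <= sq a^-1 by apply: sq_ge0.
by rewrite -e ler_wpM2l.
Qed.

Lemma msize_le_coef0 (q : P) k m : (msize q <= k)%N -> (k <= mdeg m)%N -> q@_m = 0.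
Proof. by move/msize_leP; apply. Qed.

Variable n : nat.
Local Notation N := n.+1.

Lemma hbox_ok k (ms : MB N) (h : P) :
  (msize h <= k.+1)%N -> h@_ms != 0 ->
  (forall m : MB N, sq (h@_m) <= sq (h@_ms)) ->
  forall mb, (hspec k ms mb).1 <= coord N ((h@_ms)^-1 *: h) mb <= (hspec k ms mb).2.
Proof.
move=> hs an hmax [m bb]; rewrite /hspec /=.
case: eqP => [->|ne].
  have e1 : ((h@_ms)^-1 *: h)@_ms = 1 by rewrite mcoeffZ mulVf.
  have [c1 c2] := coord_1 e1.
  by case: bb; rewrite ?c1 ?c2 /= lexx.
case: leqP => mk.
  by apply: (coord_b1 (mb := (m, bb))); rewrite /= mcoeffZ; apply: sqV_le.
by rewrite coord_0 /= ?lexx // mcoeffZ (msize_le_coef0 hs mk) mulr0.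
Qed.

Lemma qbox_norm kq (mq : MB N) (q : P) :
  (msize q <= kq.+1)%N -> q@_mq != 0 ->
  (forall m : MB N, sq (q@_m) <= sq (q@_mq)) ->
  forall mb, (qspec kq (Some mq) 1 mb).1 <= coord N ((q@_mq)^-1 *: q) mb
     <= (qspec kq (Some mq) 1 mb).2.
Proof.
move=> qs an qmax [m bb]; rewrite /qspec /=.
case: ltnP => mk.
  by rewrite coord_0 /= ?lexx // mcoeffZ (msize_le_coef0 qs mk) mulr0.
case: (Some mq =P Some m) => [[<-]|ne].
  have e1 : ((q@_mq)^-1 *: q)@_mq = 1 by rewrite mcoeffZ mulVf.
  have [c1 c2] := coord_1 e1.
  by case: bb; rewrite ?c1 ?c2 /= lexx.
by apply: (coord_b1 (mb := (m, bb))); rewrite /= mcoeffZ; apply: sqV_le.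
Qed.

Lemma qbox_bnd kq (q : P) X :
  (msize q <= kq.+1)%N -> 0 <= X ->
  (forall m : MB N, sq (q@_m) <= X) ->
  forall mb, (qspec kq None (1 + X) mb).1 <= coord N q mb
     <= (qspec kq None (1 + X) mb).2.
Proof.
move=> qs X0 qX [m bb]; rewrite /qspec /=.
case: ltnP => mk.
  by rewrite coord_0 /= ?lexx // (msize_le_coef0 qs mk).
exact: (coord_bX (mb := (m, bb))).
Qed.

End Boxes.

Section Final.
Variable R : realType.
Local Notation C := (R[i]).
Local Notation P := ({mpoly C[2]}).
Local Notation MB b := ('X_{1..2 < b}).
Local Notation re := (@complex.Re R).
Local Notation im := (@complex.Im R).

Lemma jac_size d1 d2 (F : P * P) : (0 < d1)%N -> (0 < d2)%N ->
  Omega2 d1 d2 F -> (msize (jac F) <= (d1 + d2 - 2).+1)%N.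
Proof.
move=> d1p d2p [h1 h2]; rewrite /jac.
have e : (d1 + d2 - 2 = d1.-1 + d2.-1)%N by lia.
rewrite e; apply: msize_sub_le; apply: msize_mul_le; apply: msize_deriv_le;
  rewrite prednK //; by [exact: h1| exact: h2 | rewrite prednK].
Qed.

Lemma ltC_parts (z : C) (d : R) : (`|z| < d%:C)%C -> `|re z| < d /\ `|im z| < d.
Proof.
rewrite normc_def ltcR => h.
have s0 : 0 <= re z ^+ 2 + im z ^+ 2 by rewrite addr_ge0 // sqr_ge0.
split.
  apply: le_lt_trans h; rewrite -sqrtr_sqr; apply: ler_wsqrtr.
  by rewrite lerDl sqr_ge0.
apply: le_lt_trans h; rewrite -sqrtr_sqr; apply: ler_wsqrtr.
by rewrite lerDr sqr_ge0.
Qed.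

Lemma ns0 b : ns b (0 : P) = 0.
Proof. by rewrite /ns big1 // => m _; rewrite mcoeff0 /sq /= expr0n addr0. Qed.

Lemma pcont_jac (T : topologicalType) (F1 F2 : T -> P) :
  pcont F1 -> pcont F2 -> pcont (fun t => jac (F1 t, F2 t)).
Proof.
move=> c1 c2; rewrite /jac /=.
by apply: pcontB; apply: pcontM; apply: pcont_deriv.
Qed.

End Final.

Lemma sbox_lb (R : realType) b (sL sR : 'X_{1..2 < b} * bool -> R * R)
  (f : 'rV[R]_(KK b + KK b) -> R) :
  continuous f -> (forall v, sbox sL sR v -> 0 < f v) ->
  exists2 c, 0 < c & forall v, sbox sL sR v -> c <= f v.
Proof. by move=> cf pos; apply: box_lb. Qed.

Lemma coord_close (R : realType) b (p q : {mpoly R[i][2]}) (mb : 'X_{1..2 < b} * bool) d :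
  (`|q@_(mb.1) - p@_(mb.1)| < d%:C)%C -> `|coord b p mb - coord b q mb| < d.
Proof.
move=> /ltC_parts [h1 h2]; rewrite /coord distrC; case: (mb.2).
  by move: h2; rewrite ImD ImN.
by move: h1; rewrite ReD ReN.
Qed.

Lemma jac_mkv (R : realType) b (G : {mpoly R[i][2]} * {mpoly R[i][2]}) :
  (msize G.1 <= b)%N -> (msize G.2 <= b)%N ->
  jac (polf b (fL (mkv b (coord b G.1) (coord b G.2))),
       polf b (fR (mkv b (coord b G.1) (coord b G.2)))) = jac G.
Proof. by move=> h1 h2; rewrite fL_mkv fR_mkv !polf_coord. Qed.

Lemma lt_norm0 (R : realType) (x e : R) : 0 <= x -> `|0 - x| < e -> x < e.
Proof. by move=> x0; rewrite sub0r normrN ger0_norm. Qed.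

Lemma nat_facts n x y : (1 < x)%N -> (0 < y)%N -> ((x + x).-1 + y).-1 = n.+1 ->
  [/\ (1 <= x.-1)%N, (2 * x.-1 <= n)%N, x = (x.-1).+1, y = (n - 2 * x.-1).+1
     & (x.-1 < n.+1)%N].
Proof. by move=> *; split; lia. Qed.

Lemma coef_nz_deg (R : realType) (h : {mpoly R[i][2]}) m :
  h@_m != 0 -> (mdeg m < msize h)%N.
Proof. by move=> nz; apply: msize_mdeg_lt; rewrite -[_ \in _]negbK -mcoeff_eq0. Qed.

Lemma max_coef_nz (R : realType) (h : {mpoly R[i][2]}) b (ms : 'X_{1..2 < b}) :
  h != 0 -> (msize h <= b)%N -> (forall m : 'X_{1..2 < b}, sq h@_m <= sq h@_ms) ->
  h@_ms != 0.
Proof.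
move=> hn hb hmax.
have dl : (mdeg (mlead h) < b)%N by rewrite -ltnS mlead_deg.
have := hmax (BMultinom dl); rewrite /=.
have : 0 < sq h@_(mlead h) by apply: sq_gt0; rewrite mleadc_eq0.
move=> pos le; apply/eqP => z; move: le; rewrite z.
have -> : sq (0 : R[i]) = 0 by rewrite /sq /= expr0n addr0.
by rewrite leNgt pos.
Qed.

Lemma rescale_eq (R : realType) (h q : {mpoly R[i][2]}) (a : R[i]) : a != 0 ->
  h * h * q = (a^-1 *: h) * (a^-1 *: h) * ((a * a) *: q).
Proof.
move=> an; rewrite -!mul_mpolyC.
have -> : (a^-1)%:MP * h * ((a^-1)%:MP * h) * ((a * a)%:MP * q) =
   ((a^-1 * a) * (a^-1 * a))%:MP * (h * h * q) by rewrite !mpolyCM; ring.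
by rewrite mulVf // mulr1 mpolyC1 mul1r.
Qed.

Lemma rescale_eq2 (R : realType) (x q : {mpoly R[i][2]}) (l : R[i]) : l != 0 ->
  x * q = l *: (x * (l^-1 *: q)).
Proof. by move=> ln; rewrite -scalerAr scalerA mulfV // scale1r. Qed.

Theorem lemma3p3 (R : realType) (d1 d2 : nat) :
  (0 < d1)%N -> (0 < d2)%N ->
  open_in_Omega2 d1 d2
    (fun F : poly2 R[i] * poly2 R[i] =>
       Omega2 d1 d2 F /\ reduced (jac F) /\ deg_eq (d1 + d2 - 2) (jac F)).
Proof.
move=> d1p d2p F OF [_ [red deg]].
set n := (d1 + d2 - 2)%N in deg *.
set p := jac F in red deg.
rewrite /deg_eq in deg.
pose N := n.+1.
pose Phi1 (v : 'rV[R]_(KK N + KK N)) :=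
  ns N (polf N (fL v) * polf N (fL v) * polf N (fR v)).
pose Phi2 (v : 'rV[R]_(KK N + KK N)) :=
  ns N (polf N (fL v) * polf N (fL v) * polf N (fR v) - p).
have pcH : pcont (fun v : 'rV[R]_(KK N + KK N) => polf N (fL v)).
  by apply: pcont_polf => mb; apply: fL_cont.
have pcQ : pcont (fun v : 'rV[R]_(KK N + KK N) => polf N (fR v)).
  by apply: pcont_polf => mb; apply: fR_cont.
have cPhi1 : continuous Phi1 := ns_cont (b:=N) (pcontM (pcontM pcH pcH) pcQ).
have cPhi2 : continuous Phi2.
  apply: (ns_cont (b:=N)); apply: pcontB; first exact: pcontM (pcontM pcH pcH) pcQ.
  exact: pcont_cst.
have [c1 c1p Hc1] : exists2 c1, 0 < c1 & forall i : 'I_N * 'X_{1..2 < N} * 'X_{1..2 < N},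
    (1 <= i.1.1)%N -> (2 * i.1.1 <= n)%N -> (mdeg i.1.2 <= i.1.1)%N ->
    (mdeg i.2 <= n - 2 * i.1.1)%N ->
    forall v, sbox (hspec i.1.1 i.1.2) (qspec (n - 2 * i.1.1) (Some i.2) 1) v ->
    c1 <= Phi1 v.
  apply: fin_lb.
    move=> [[k ms] mq] /=.
    case: (boolP [&& (1 <= k)%N, (2 * k <= n)%N, (mdeg ms <= k)%N &
                    (mdeg mq <= n - 2 * k)%N]).
      move=> /and4P [a1 a2 a3 a4].
      have [c cp Hc] := sbox_lb cPhi1 (fun v => phi1_pos deg a1 a2 a3 a4).
      by exists c => // *; apply: Hc.
    move=> nh; exists 1 => // a1 a2 a3 a4; exfalso; move/negP: nh; apply.
    by rewrite a1 a2 a3 a4.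
  move=> i c c' c'0 le H a1 a2 a3 a4 v hv.
  by apply: le_trans le (H a1 a2 a3 a4 v hv).
pose X := (2 + 2 * ns N p) / c1.
have X0 : 0 <= X by rewrite /X divr_ge0 ?addr_ge0 ?mulr_ge0 ?ns_ge0 // ltW.
pose B := 1 + X.
have [c2 c2p Hc2] : exists2 c2, 0 < c2 & forall i : 'I_N * 'X_{1..2 < N},
    (1 <= i.1)%N -> (2 * i.1 <= n)%N -> (mdeg i.2 <= i.1)%N ->
    forall v, sbox (hspec i.1 i.2) (qspec (n - 2 * i.1) None B) v ->
    c2 <= Phi2 v.
  apply: (@fin_lb R _ (fun (i : 'I_N * 'X_{1..2 < N}) c2 =>
    (1 <= i.1)%N -> (2 * i.1 <= n)%N -> (mdeg i.2 <= i.1)%N ->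
    forall v, sbox (hspec i.1 i.2) (qspec (n - 2 * i.1) None B) v ->
    c2 <= Phi2 v)).
    move=> [k ms] /=.
    case: (boolP [&& (1 <= k)%N, (2 * k <= n)%N & (mdeg ms <= k)%N]).
      move=> /and3P [a1 a2 a3].
      have [c cp Hc] := sbox_lb cPhi2 (fun v => @phi2_pos _ _ _ deg red k ms B v a1 a2 a3).
      by exists c => // *; apply: Hc.
    move=> nh; exists 1 => // a1 a2 a3; exfalso; move/negP: nh; apply.
    by rewrite a1 a2 a3.
  move=> i c c' c'0 le H a1 a2 a3 v hv.
  by apply: le_trans le (H a1 a2 a3 v hv).
have pn0 : p != 0 by rewrite -msize_poly_eq0 deg.
pose m0 := mlead p.
have pm0 : p@_m0 != 0 by rewrite mleadc_eq0.
have dm0 : mdeg m0 = n by apply/eq_add_S; rewrite mlead_deg.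
pose e := Num.min 1 (Num.min (sq p@_m0) c2).
have sp0 : 0 < sq p@_m0 by apply: sq_gt0.
have e0 : 0 < e by rewrite /e !lt_min ltr01 sp0 c2p.
have e1 : e <= 1 by rewrite /e ge_min lexx.
have e2 : e <= sq p@_m0 by rewrite /e !ge_min lexx orbT.
have e3 : e <= c2 by rewrite /e !ge_min lexx !orbT.
pose D := (d1 + d2).+1.
pose Th (w : 'rV[R]_(KK D + KK D)) :=
  ns N (jac (polf D (fL w), polf D (fR w)) - p).
have cTh : continuous Th.
  apply: ns_cont; apply: pcontB; last exact: pcont_cst.
  by apply: pcont_jac; apply: pcont_polf => mb; [apply: fL_cont|apply: fR_cont].
have [OF1 OF2] := OF.
have F1D : (msize F.1 <= D)%N by apply: leq_trans OF1 _; rewrite /D ltnS leq_addr.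
have F2D : (msize F.2 <= D)%N by apply: leq_trans OF2 _; rewrite /D ltnS leq_addl.
pose w0 := mkv D (coord D F.1) (coord D F.2).
have Th0 : Th w0 = 0.
  by rewrite /Th /w0 fL_mkv fR_mkv !polf_coord // -/(jac F) -/p subrr ns0.
have /nbhs_ballP [del del0 Hdel] := cTh w0 _ (nbhsx_ballx (Th w0) e e0).
exists del; split; first exact: del0.
move=> G OG close.
have [OG1 OG2] := OG.
have G1D : (msize G.1 <= D)%N by apply: leq_trans OG1 _; rewrite /D ltnS leq_addr.
have G2D : (msize G.2 <= D)%N by apply: leq_trans OG2 _; rewrite /D ltnS leq_addl.
pose w := mkv D (coord D G.1) (coord D G.2).
have bw : ball w0 del w.
  split; first exact: del0.
  move=> i j; rewrite (ord1 i) -ball_normE /ball_ /w0 /w /mkv !mxE.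
  by case: (split j) => x; apply: coord_close; [apply: (close _).1|apply: (close _).2].
have nsP : ns N (jac G - p) < e.
  have := Hdel _ bw; rewrite -ball_normE /ball_ Th0 => /lt_norm0.
  by rewrite /Th /w jac_mkv //; apply; apply: ns_ge0.
set P := jac G in nsP *.
split; first exact: OG.
have Psz : (msize P <= N)%N := jac_size d1p d2p OG.
clearbody P.
have m0N : (mdeg m0 < N)%N by rewrite dm0.
have Pm0 : P@_m0 != 0.
  apply/negP => /eqP z.
  have h : sq (P - p)@_m0 <= ns N (P - p) := ns_ge_term' (b := N) (P - p) m0N.
  have e' : (P - p)@_m0 = - p@_m0 by rewrite mcoeffB z sub0r.
  rewrite e' sqN in h.
  have := lt_le_trans (le_lt_trans h nsP) e2.
  by rewrite ltxx.
have degP : msize P = N.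
  apply/eqP; rewrite eqn_leq Psz /=.
  by have := coef_nz_deg Pm0; rewrite dm0.
split; last exact: degP.
move=> h q EQ; rewrite leqNgt; apply/negP => h2.
have hn : h != 0.
  by apply/eqP => z; move: degP; rewrite EQ z !mul0r msize0.
have qn : q != 0.
  by apply/eqP => z; move: degP; rewrite EQ z !mulr0 msize0.
have hhn : h * h != 0 by rewrite mulf_neq0.
have szE : ((msize h + msize h).-1 + msize q).-1 = n.+1.
  by rewrite -msizeM // -msizeM // -EQ.
have q0 : (0 < msize q)%N by rewrite lt0n msize_poly_eq0.
have [k1 k2 hk qk kN] := nat_facts h2 q0 szE.
set k := (msize h).-1 in k1 k2 hk qk kN.
have i0 : 'X_{1..2 < N} := bm0.
have [ms Hms] := exists_max i0 (fun m : 'X_{1..2 < N} => sq (h@_m)).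
have hN : (msize h <= N)%N by rewrite hk ltnS; apply: leq_trans (leq_pmull _ _) k2.
have an := max_coef_nz hn hN Hms.
have msk : (mdeg ms <= k)%N by rewrite -ltnS -hk; apply: coef_nz_deg.
set a := h@_ms in an.
pose h' := a^-1 *: h.
pose q' := (a * a) *: q.
have EQ' : P = h' * h' * q' by rewrite EQ (rescale_eq _ _ an).
have aan : a * a != 0 by rewrite mulf_neq0.
have q'n : q' != 0 by rewrite scaler_eq0 negb_or aan.
have q'sz : msize q' = (n - 2 * k).+1 by rewrite msizeZ.
have h'sz : msize h' = k.+1 by rewrite msizeZ ?invr_eq0.
have q'N : (msize q' <= N)%N by rewrite q'sz ltnS leq_subr.
have [mq Hmq] := exists_max i0 (fun m : 'X_{1..2 < N} => sq (q'@_m)).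
have lamn := max_coef_nz q'n q'N Hmq.
have mqk : (mdeg mq <= n - 2 * k)%N by rewrite -ltnS -q'sz; apply: coef_nz_deg.
set lam := q'@_mq in lamn.
pose q'' := lam^-1 *: q'.
have q''N : (msize q'' <= N)%N by rewrite msizeZ ?invr_eq0.
have h'N : (msize h' <= N)%N by rewrite h'sz.
pose v1 := mkv N (coord N h') (coord N q'').
have sb1 : sbox (hspec k ms) (qspec (n - 2 * k) (Some mq) 1) v1.
  apply/sboxP; rewrite /v1 fL_mkv fR_mkv; split.
    by apply: hbox_ok; rewrite // hk.
  by apply: qbox_norm; rewrite // q'sz.
have c1le := Hc1 (Ordinal kN, ms, mq) k1 k2 msk mqk v1 sb1.
have Phi1E : Phi1 v1 = ns N (h' * h' * q'').
  by rewrite /Phi1 /v1 fL_mkv fR_mkv !polf_coord.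
have EQ'' : P = lam *: (h' * h' * q'') by rewrite EQ' (rescale_eq2 _ _ lamn).
have nsPE : ns N P = sq lam * ns N (h' * h' * q'') by rewrite {1}EQ'' nsZ.
have nsPle : ns N P <= 2 + 2 * ns N p.
  apply: le_trans (ns_sub_le N P p) _; rewrite lerD2r.
  rewrite -[X in _ <= X]mulr1 ler_wpM2l //.
  exact: le_trans (ltW nsP) e1.
have lamX : sq lam <= X.
  rewrite /X ler_pdivlMr //; apply: le_trans nsPle.
  rewrite nsPE; apply: ler_wpM2l; first exact: sq_ge0.
  by rewrite -Phi1E.
have Hq'X : forall m : 'X_{1..2 < N}, sq q'@_m <= X.
  by move=> m; apply: le_trans (Hmq m) lamX.
pose v2 := mkv N (coord N h') (coord N q').
have sb2 : sbox (hspec k ms) (qspec (n - 2 * k) None B) v2.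
  apply/sboxP; rewrite /v2 fL_mkv fR_mkv; split.
    by apply: hbox_ok; rewrite // hk.
  by apply: qbox_bnd; rewrite // q'sz.
have c2le := Hc2 (Ordinal kN, ms) k1 k2 msk v2 sb2.
have Phi2E : Phi2 v2 = ns N (P - p).
  by rewrite /Phi2 /v2 fL_mkv fR_mkv !polf_coord // EQ'.
have nsP2 : Phi2 v2 < e by rewrite Phi2E.
have := lt_le_trans (le_lt_trans c2le nsP2) e3.
by rewrite ltxx.
Qed.
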